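(* Let $N>p\geq1$ and let $\mathbf{U}\in\mathbb{R}^{N\times p}$ with $\mathbf{U}^T\mathbf{U}=\mathbf{I}_p$ be drawn from the Bingham distribution with $N\times N$ symmetric parameter matrix $\mathbf{A}$, i.e. with density (with respect to the normalized uniform measure on $\{\mathbf{U}:\mathbf{U}^T\mathbf{U}=\mathbf{I}_p\}$) $p_B(\mathbf{U})=\exp(-\kappa_B(\mathbf{A}))\,\mathrm{etr}(\mathbf{U}^T\mathbf{A}\mathbf{U})$, where $\kappa_B(\mathbf{A})=\ln{}_1F_1(\tfrac{p}{2};\tfrac{N}{2};\mathbf{A})$. Let $\mathbf{A}=\mathbf{U}_a\boldsymbol{\Lambda}_a\mathbf{U}_a^T$ be an eigenvalue decomposition of $\mathbf{A}$ with $\mathbf{U}_a$ orthogonal and $\boldsymbol{\Lambda}_a=\mathrm{diag}(\lambda_a(1),\dots,\lambda_a(N))$, $\lambda_a(1)\geq\dots\geq\lambda_a(N)$. Define $\mathbf{M}=\int\mathbf{U}\mathbf{U}^Tp_B(\mathbf{U})\,d\mathbf{U}$. Then the eigenvalue decomposition of $\mathbf{M}$ is $\mathbf{M}=\exp(-\kappa_B(\mathbf{A}))\,\mathbf{U}_a\boldsymbol{\Gamma}\mathbf{U}_a^T$, where $\boldsymbol{\Gamma}=\mathrm{diag}(\gamma_1,\dots,\gamma_N)$ with $\gamma_k=\frac{\partial \exp(\kappa_B(\boldsymbol{\Lambda}_a))}{\partial\lambda_a(k)}$ (that is, $\boldsymbol{\Gamma}=\partial\exp(\kappa_B(\mathbf{A}))/\partial\boldsymbol{\Lambda}_a$,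 using $\kappa_B(\mathbf{A})=\kappa_B(\boldsymbol{\Lambda}_a)$), and $\gamma_1\geq\gamma_2\geq\dots\geq\gamma_N$.
   Context: $\mathrm{etr}(\mathbf{X})=\exp(\mathrm{Tr}(\mathbf{X}))$. ${}_1F_1(a;b;\mathbf{X})$ is the confluent hypergeometric function of matrix argument, which here is the normalizing constant: ${}_1F_1(\tfrac p2;\tfrac N2;\mathbf{A})=\int\mathrm{etr}(\mathbf{U}^T\mathbf{A}\mathbf{U})\,d\mathbf{U}$ with respect to the normalized uniform measure; it depends on $\mathbf{A}$ only through its eigenvalues. *)

(* Defs.v *)
From HB Require Import structures.
From mathcomp Require Import all_boot all_order all_algebra.
From mathcomp Require Import all_classical all_reals all_analysis.
Set Implicit Arguments. Unset Strict Implicit. Unset Printing Implicit Defensive.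
Import Order.TTheory GRing.Theory Num.Theory.
Import numFieldNormedType.Exports.
Local Open Scope classical_set_scope.
Local Open Scope ring_scope.

Section Bingham.
Variables (R : realType) (N p : nat).

(* sigma-algebra on N x p real matrices generated by the entry maps
   (= Borel sigma-algebra of R^{N x p}) *)
Definition entry_sets : set (set 'M[R]_(N, p)) :=
  [set X | exists (i : 'I_N) (j : 'I_p) (B : set R),
      measurable B /\ X = (fun M : 'M[R]_(N, p) => M i j) @^-1` B].

Definition mxMeas := g_sigma_algebraType entry_sets.

Definition stiefel : set mxMeas := [set U : 'M[R]_(N, p) | U^T *m U = 1%:M].

(* mu is the normalized uniform measure on the Stiefel manifold:
   a probability measure carried by the Stiefel manifold and invariant under
   left multiplication by orthogonal matrices (unique by compactness and
   transitivity of the O(N) action). *)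
Definition uniform_stiefel (mu : probability mxMeas R) : Prop :=
  mu stiefel = 1%E /\
  forall Q : 'M[R]_N, Q^T *m Q = 1%:M ->
    forall X : set mxMeas, measurable X ->
      mu ((fun U : mxMeas => (Q *m U : mxMeas)) @^-1` X) = mu X.

Definition etr (m : nat) (X : 'M[R]_m) : R := expR (\tr X).

(* 1F1(p/2; N/2; A) = \int etr(U^T A U) dU *)
Definition hyp1F1 (mu : probability mxMeas R) (A : 'M[R]_N) : R :=
  \int[mu]_(U in [set: mxMeas]) etr (U^T *m A *m (U : 'M[R]_(N, p))).

Definition kappaB (mu : probability mxMeas R) (A : 'M[R]_N) : R :=
  ln (hyp1F1 mu A).

Definition binghamDensity (mu : probability mxMeas R) (A : 'M[R]_N)
    (U : mxMeas) : R :=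
  expR (- kappaB mu A) * etr (U^T *m A *m (U : 'M[R]_(N, p))).

Definition binghamSecondMoment (mu : probability mxMeas R) (A : 'M[R]_N)
    : 'M[R]_N :=
  \matrix_(i, j) \int[mu]_(U in [set: mxMeas])
      (((U : 'M[R]_(N, p)) *m U^T) i j * binghamDensity mu A U).

Definition rowset (lam : 'rV[R]_N) (k : 'I_N) (t : R) : 'rV[R]_N :=
  \row_i (if i == k then t else lam 0 i).

(* t |-> exp(kappa_B(diag(lam_1, .., t, .., lam_N))) ; its derivative at
   t = lam_k is the partial derivative d exp(kappa_B(Lambda_a)) / d lam_a(k) *)
Definition expkappa_k (mu : probability mxMeas R) (lam : 'rV[R]_N) (k : 'I_N)
    (t : R) : R :=
  expR (kappaB mu (diag_mx (rowset lam k t))).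

Definition gammaB (mu : probability mxMeas R) (lam : 'rV[R]_N) : 'rV[R]_N :=
  \row_k derive1 (expkappa_k mu lam k) (lam 0 k).

End Bingham.

(* Main.v *)
Require Import Defs.
From HB Require Import structures.
From mathcomp Require Import all_boot all_order all_algebra.
From mathcomp Require Import all_classical all_reals all_analysis.
From mathcomp Require Import ring lra.
From mathcomp Require Import perm.
Import Order.TTheory GRing.Theory Num.Theory.
Import numFieldNormedType.Exports.
Local Open Scope classical_set_scope.
Local Open Scope ring_scope.
Lemma deriv_cv (R : realType) (f : R -> R) a G C : 0 <= C ->
  (forall h, h != 0 -> `|h| <= 2^-1 -> `|h^-1 * (f (h + a) - f a) - G| <= C * `|h|) ->
  (fun h => h^-1 *: (f (h + a) - f a)) @ 0^' --> G.
Proof.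
move=> C0 hb.
apply/cvgrPdist_le => e e0.
have d0 : 0 < Num.min (2^-1) (e / (C + 1)).
  by rewrite lt_min invr_gt0 ltr0n /= divr_gt0 // ltr_wpDl.
near=> h.
have hn0 : h != 0 by near: h; exact: nbhs_dnbhs_neq.
have hd : `|h| <= Num.min (2^-1) (e / (C + 1)) by near: h; exact: dnbhs0_le.
move: hd; rewrite le_min => /andP[h2 he].
rewrite distrC; apply: le_trans (hb h hn0 h2) _.
apply: le_trans (ler_wpM2l C0 he) _.
rewrite mulrA ler_pdivrMr ?ltr_wpDl //; nra.
Unshelve. all: by end_near.
Qed.

Lemma deriv_bound (R : realType) (f : R -> R) a G C : 0 <= C ->
  (forall h, h != 0 -> `|h| <= 2^-1 -> `|h^-1 * (f (h + a) - f a) - G| <= C * `|h|) ->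
  derivable f a 1 /\ derive1 f a = G.
Proof.
move=> C0 hb; have cv := deriv_cv R f a G C C0 hb.
have e : (fun h => h^-1 *: ((f \o shift a) (h *: 1) - f a)) = (fun h => h^-1 *: (f (h + a) - f a)).
  by apply: funext => h /=; rewrite /shift [h%:A]mulr1.
split.
  by rewrite /derivable e; apply/cvg_ex; exists G.
rewrite /derive1; exact: cvg_lim.
Qed.

Import measurable_realfun.
Section S.
Variables (R : realType) (N p : nat).
Local Notation T := (mxMeas R N p).
Local Notation S := (@stiefel R N p).

Lemma mentry (i : 'I_N) (j : 'I_p) : measurable_fun setT (fun U : T => (U : 'M[R]_(N,p)) i j).
Proof.
move=> _ B mB; rewrite setTI.
apply: sub_sigma_algebra; exists i, j, B; split => //.
Qed.

Definition good (f : T -> R) := measurable_fun setT f /\ exists M : R, forall U, S U -> `|f U| <= M.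

Lemma stiefel_entry (U : T) i j : S U -> `|(U : 'M[R]_(N,p)) i j| <= 1.
Proof.
move=> SU.
have : (((U : 'M[R]_(N,p))^T *m U) j j = 1).
  by rewrite SU mxE eqxx.
rewrite mxE (bigD1 i) //= !mxE => H.
have : (U : 'M[R]_(N,p)) i j ^+ 2 <= 1.
  rewrite -H expr2 lerDl; apply: sumr_ge0 => k _; rewrite mxE -expr2; exact: sqr_ge0.
rewrite ler_norml; set x := _ i j => hx; apply/andP; split; nra.
Qed.

Lemma good_entry i j : good (fun U : T => (U : 'M[R]_(N,p)) i j).
Proof. split; [exact: mentry | exists 1 => U; exact: stiefel_entry]. Qed.

Lemma good_cst c : good (fun _ : T => c).
Proof. split; [exact: measurable_cst | by exists `|c|]. Qed.

Lemma good_add f g : good f -> good g -> good (fun U => f U + g U).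
Proof.
move=> [mf [M1 hf]] [mg [M2 hg]]; split.
  exact: measurable_realfun.measurable_funD.
exists (M1 + M2) => U SU; apply: le_trans (ler_normD _ _) _; by apply: lerD; [apply: hf|apply: hg].
Qed.

Lemma good_opp f : good f -> good (fun U => - f U).
Proof.
move=> [mf [M hf]]; split; first exact: measurable_realfun.measurable_funN.
by exists M => U SU; rewrite normrN; exact: hf.
Qed.

Lemma good_mul f g : good f -> good g -> good (fun U => f U * g U).
Proof.
move=> [mf [M1 hf]] [mg [M2 hg]]; split.
  exact: measurable_realfun.measurable_funM.
exists (M1 * M2) => U SU; rewrite normrM; by apply: ler_pM => //; [apply: hf|apply: hg].
Qed.

Lemma good_sum {I : Type} (s : seq I) (F : I -> T -> R) :
  (forall i, good (F i)) -> good (fun U => \sum_(i <- s) F i U).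
Proof.
move=> hF; elim: s => [|i s IH].
  under [fun U => _]funext do rewrite big_nil; exact: good_cst.
under [fun U => _]funext do rewrite big_cons; exact: good_add.
Qed.

Lemma good_exp f : good f -> good (fun U => expR (f U)).
Proof.
move=> [mf [M hf]]; split.
  exact: (measurableT_comp (@measurable_realfun.measurable_expR R) mf).
exists (expR M) => U SU; rewrite ger0_norm ?expR_ge0 // ler_expR.
exact: le_trans (ler_norm _) (hf U SU).
Qed.

Lemma good_ext {f g} : good f -> (forall U, f U = g U) -> good g.
Proof. by move=> h e; have <- : f = g by apply: funext. Qed.

Definition goodM {m n : nat} (F : T -> 'M[R]_(m,n)) := forall i j, good (fun U => F U i j).

Lemma goodM_id : goodM (fun U : T => (U : 'M[R]_(N,p))).
Proof. move=> i j; exact: good_entry. Qed.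

Lemma goodM_cst {m n} (C : 'M[R]_(m,n)) : goodM (fun _ => C).
Proof. move=> i j; exact: good_cst. Qed.

Lemma goodM_tr {m n} {F : T -> 'M[R]_(m,n)} : goodM F -> goodM (fun U => (F U)^T).
Proof. move=> hF i j; refine (good_ext (hF j i) _) => U; by rewrite mxE. Qed.

Lemma goodM_mul {m n k} {F : T -> 'M[R]_(m,n)} {G : T -> 'M[R]_(n,k)} :
  goodM F -> goodM G -> goodM (fun U => F U *m G U).
Proof.
move=> hF hG i j; refine (good_ext (good_sum (index_enum _) (fun l U => F U i l * G U l j) _) _).
  by move=> l; apply: good_mul.
by move=> U; rewrite mxE.
Qed.

Lemma good_tr {n} {F : T -> 'M[R]_n} : goodM F -> good (fun U => \tr (F U)).
Proof.
move=> hF; refine (good_ext (good_sum (index_enum _) (fun l U => F U l l) _) _) => //.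
Qed.


Definition hS (U : T) : R := \sum_i \sum_j
  ((((U : 'M[R]_(N,p))^T *m U) i j - (1%:M : 'M[R]_p) i j) *
   (((U : 'M[R]_(N,p))^T *m U) i j - (1%:M : 'M[R]_p) i j)).

Lemma good_hS : good hS.
Proof.
apply: good_sum => i; apply: good_sum => j.
have h : good (fun U : T => ((U : 'M[R]_(N,p))^T *m U) i j - (1%:M : 'M[R]_p) i j).
  apply: good_add; last exact: good_cst.
  have := goodM_mul (goodM_tr goodM_id) goodM_id i j.
  exact.
exact: good_mul.
Qed.

Lemma S_hS : S = hS @^-1` [set 0].
Proof.
apply/seteqP; split => U /=.
  move=> SU; rewrite /hS; apply: big1 => i _; apply: big1 => j _.
  by rewrite /stiefel /= in SU; rewrite SU subrr mulr0.
move=> h0; rewrite /stiefel /=; apply/matrixP => i j.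
have sq0 : forall x : R, 0 <= x * x by move=> x; rewrite -expr2 sqr_ge0.
have h1 := @psumr_eq0P _ _ _ _ (fun i _ => sumr_ge0 _ (fun j _ => sq0 _)) h0 i isT.
have h2 := @psumr_eq0P _ _ _ _ (fun j _ => sq0 _) h1 j isT.
by move/eqP: h2; rewrite mulf_eq0 orbb subr_eq0 => /eqP.
Qed.

Lemma mS : measurable S.
Proof.
have [mh _] := good_hS.
by rewrite S_hS -(setTI (_ @^-1` _)); apply: mh => //; exact: measurable_set1.
Qed.

Lemma stiefel_Q (Q : 'M[R]_N) (U : T) : Q^T *m Q = 1%:M -> S U -> S (Q *m (U : 'M[R]_(N,p)) : T).
Proof.
rewrite /stiefel /= => hQ hU.
by rewrite trmx_mul -mulmxA (mulmxA Q^T) hQ mul1mx.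
Qed.

Lemma mphi (Q : 'M[R]_N) : measurable_fun setT (fun U : T => (Q *m (U : 'M[R]_(N,p)) : T)).
Proof.
have := @measurability _ _ T T setT (fun U : T => (Q *m (U : 'M[R]_(N,p)) : T)) (@entry_sets R N p) erefl.
apply.
move=> X [B [i [j [C [mC ->]]]] <-].
have [mf _] := goodM_mul (goodM_cst Q) goodM_id i j.
exact: mf.
Qed.

Lemma good_comp (Q : 'M[R]_N) f : Q^T *m Q = 1%:M -> good f ->
  good (fun U : T => f (Q *m (U : 'M[R]_(N,p)) : T)).
Proof.
move=> hQ [mf [M hM]]; split.
  exact: (measurableT_comp mf (mphi Q)).
by exists M => U SU; apply: hM; exact: stiefel_Q.
Qed.


Variables (mu : probability T R) (hmu : uniform_stiefel mu).

Lemma muSC : mu (~` S) = 0%E.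
Proof. rewrite probability_setC; last exact: mS. by rewrite (proj1 hmu) subee. Qed.

Lemma int_good {f} : good f -> mu.-integrable setT (EFin \o f).
Proof.
move=> [mf [M hM]]; apply/integrableP; split.
  exact/measurable_EFinP.
have mab : measurable_fun setT (fun x => `|(EFin \o f) x|%E).
  by apply: measurableT_comp => //; exact/measurable_EFinP.
rewrite (ge0_negligible_integral (N := ~` S) _ _ mab) //; last exact: muSC.
  2: exact: measurableC mS.
rewrite setTD setCK.
apply: (@le_lt_trans _ _ (\int[mu]_(x in S) (cst `|M|%:E) x)%E).
  apply: ge0_le_integral => //.
  - exact: mS.
  - exact: measurable_funS mab.
  - move=> U SU; rewrite /= lee_fin; apply: le_trans (hM U SU) (ler_norm _).
rewrite integral_cst; last exact: mS.
rewrite [X in (_ * X)%E](_ : _ = 1%E); last exact: (proj1 hmu).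
by rewrite mule1 ltry.
Qed.

Lemma Rint_S {f} : good f -> \int[mu]_x f x = \int[mu]_(x in S) f x.
Proof.
move=> gf; rewrite /Rintegral; congr fine.
rewrite (negligible_integral (N := ~` S) _ _ (int_good gf)) //.
- by rewrite setTD setCK.
- exact: measurableC mS.
- exact: muSC.
Qed.

Lemma int_goodS {f} : good f -> mu.-integrable S (EFin \o f).
Proof. move=> gf; exact: integrableS _ mS _ (int_good gf). Qed.

Lemma Rint_le f g : good f -> good g -> (forall U, S U -> f U <= g U) ->
  \int[mu]_x f x <= \int[mu]_x g x.
Proof.
move=> gf gg fg; rewrite (Rint_S gf) (Rint_S gg).
by apply: le_Rintegral; [exact: mS|exact: int_goodS|exact: int_goodS|].
Qed.

Lemma Rint_cst c : \int[mu]_x c = c.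
Proof. rewrite Rintegral_cst // [X in fine X](_ : _ = 1%E) ?mulr1 //; exact: probability_setT. Qed.

Lemma Rint_add f g : good f -> good g ->
  \int[mu]_x (f x + g x) = \int[mu]_x f x + \int[mu]_x g x.
Proof. by move=> gf gg; apply: RintegralD => //; exact: int_good. Qed.

Lemma Rint_scale c f : good f -> \int[mu]_x (c * f x) = c * \int[mu]_x f x.
Proof. by move=> gf; apply: RintegralZl => //; exact: int_good. Qed.

Lemma Rint_sum {I : Type} (s : seq I) (F : I -> T -> R) : (forall i, good (F i)) ->
  \int[mu]_x (\sum_(i <- s) F i x) = \sum_(i <- s) \int[mu]_x F i x.
Proof.
move=> gF; elim: s => [|i s IH].
  by under eq_Rintegral do rewrite big_nil; rewrite big_nil Rint_cst.
under eq_Rintegral do rewrite big_cons.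
by rewrite big_cons Rint_add // ?IH //; exact: good_sum.
Qed.

Lemma Rint_inv (Q : 'M[R]_N) f : Q^T *m Q = 1%:M -> good f ->
  \int[mu]_x f (Q *m (x : 'M[R]_(N,p)) : T) = \int[mu]_x f x.
Proof.
move=> hQ gf; rewrite /Rintegral; congr fine.
rewrite [RHS](eq_measure_integral (pushforward mu (fun U : T => (Q *m (U : 'M[R]_(N,p)) : T)))).
all: try exact: mphi.
- move=> mp; rewrite (integral_pushforward mp) //.
  + by apply/measurable_EFinP; case: gf.
  + rewrite preimage_setT; exact (int_good (good_comp Q f hQ gf)).
- move=> mp A mA _; rewrite /pushforward; symmetry; exact: (proj2 hmu Q hQ A mA).
Qed.


Definition W (V : T) : 'M[R]_N := (V : 'M[R]_(N,p)) *m (V : 'M[R]_(N,p))^T.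
Definition E (r : 'rV[R]_N) (V : T) : R := etr ((V : 'M[R]_(N,p))^T *m diag_mx r *m V).

Lemma goodW k l : good (fun V => W V k l).
Proof. exact: (goodM_mul goodM_id (goodM_tr goodM_id)). Qed.

Lemma goodE r : good (E r).
Proof.
apply: good_exp; apply: good_tr.
exact: (goodM_mul (goodM_mul (goodM_tr goodM_id) (goodM_cst _)) goodM_id).
Qed.

Lemma good_etr (B : 'M[R]_N) : good (fun U : T => etr ((U : 'M[R]_(N,p))^T *m B *m U)).
Proof.
apply: good_exp; apply: good_tr.
exact: (goodM_mul (goodM_mul (goodM_tr goodM_id) (goodM_cst _)) goodM_id).
Qed.

Lemma tr_diag r (V : T) :
  \tr ((V : 'M[R]_(N,p))^T *m diag_mx r *m V) = \sum_k r 0 k * W V k k.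
Proof.
rewrite -mulmxA mxtrace_mulC -mulmxA /mxtrace; apply: eq_bigr => k _.
by rewrite mul_diag_mx mxE.
Qed.

Lemma EE r V : E r V = expR (\sum_k r 0 k * W V k k).
Proof. by rewrite /E /etr tr_diag. Qed.

Lemma W_ge0 V k : 0 <= W V k k.
Proof.
rewrite /W mxE; apply: sumr_ge0 => j _; rewrite mxE -expr2; exact: sqr_ge0.
Qed.

Lemma W_sym V k l : W V k l = W V l k.
Proof. by rewrite /W !mxE; apply: eq_bigr => j _; rewrite !mxE mulrC. Qed.

Lemma W_le1 V k : S V -> W V k k <= 1.
Proof.
move=> SV.
have WW : W V *m W V = W V.
  rewrite /W mulmxA -(mulmxA _ (V : 'M[R]_(N,p))^T).
  by move: SV; rewrite /stiefel /= => ->; rewrite mulmx1.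
have : W V k k ^+ 2 <= W V k k.
  have e : W V k k = \sum_l W V k l * W V l k by rewrite -{1}WW mxE.
  rewrite {2}e (bigD1 k) //= -expr2 lerDl.
  apply: sumr_ge0 => l _; rewrite (W_sym V l k) -expr2; exact: sqr_ge0.
have := W_ge0 V k; set x := W V k k => h0 h1; nra.
Qed.

Lemma expR_bound (x : R) : `|x| <= 2^-1 -> 0 <= expR x - 1 - x <= 2 * x ^+ 2.
Proof.
move=> hx; have l1 := expR_ge1Dx x; have l2 := expR_ge1Dx (- x).
have m := expRxMexpNx_1 x; have p1 := expR_gt0 x.
move: hx; rewrite ler_norml => /andP[hx1 hx2].
apply/andP; split; first lra.
set e := expR x in l1 m p1 *; set e' := expR (- x) in l2 m *.
nra.
Qed.

Lemma Rint_exp_gt0 g : good g -> 0 < \int[mu]_x expR (g x).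
Proof.
move=> gg; have [mg [M hM]] := gg.
apply: (@lt_le_trans _ _ (expR (- M))); first exact: expR_gt0.
rewrite -{1}(Rint_cst (expR (- M))).
apply: Rint_le; [exact: good_cst | exact: good_exp |].
move=> U SU; rewrite ler_expR; have := hM U SU; rewrite ler_norml => /andP[h _]; lra.
Qed.

Lemma hyp_gt0 (B : 'M[R]_N) : 0 < hyp1F1 mu B.
Proof.
rewrite /hyp1F1 /etr; apply: Rint_exp_gt0; apply: good_tr.
exact: (goodM_mul (goodM_mul (goodM_tr goodM_id) (goodM_cst _)) goodM_id).
Qed.

Lemma orth_r (Q : 'M[R]_N) : Q^T *m Q = 1%:M -> Q *m Q^T = 1%:M.
Proof. exact: mulmx1C. Qed.

Section Dec.
Variables (A Ua : 'M[R]_N) (lam : 'rV[R]_N).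
Hypotheses (hUa : Ua^T *m Ua = 1%:M) (hdec : A = Ua *m diag_mx lam *m Ua^T).

Lemma conjA (V : T) : (Ua *m (V : 'M[R]_(N,p)))^T *m A *m (Ua *m (V : 'M[R]_(N,p)))
  = (V : 'M[R]_(N,p))^T *m diag_mx lam *m V.
Proof.
have h2 := orth_r Ua hUa.
rewrite hdec trmx_mul !mulmxA -(mulmxA _ Ua^T Ua) hUa mulmx1.
by rewrite -(mulmxA _ Ua^T Ua) hUa mulmx1.
Qed.

Lemma hyp_A : hyp1F1 mu A = hyp1F1 mu (diag_mx lam).
Proof.
rewrite /hyp1F1 -(Rint_inv Ua _ hUa (good_etr A)).
by apply: eq_Rintegral => V _; rewrite conjA.
Qed.


Definition G k l := \int[mu]_V (W V k l * E lam V).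

Lemma goodWE k l : good (fun V => W V k l * E lam V).
Proof. apply: good_mul; [exact: goodW | exact: goodE]. Qed.

Definition sgn (k : 'I_N) : 'rV[R]_N := \row_m (if m == k then -1 else 1).

Lemma sgn2 k m : sgn k 0 m * sgn k 0 m = 1.
Proof. by rewrite mxE; case: ifP => _; rewrite ?mulrNN mulr1. Qed.

Lemma sgn_orth k : (diag_mx (sgn k))^T *m diag_mx (sgn k) = 1%:M.
Proof.
rewrite tr_diag_mx mulmx_diag; apply/matrixP => a b; rewrite !mxE.
by case: (a == b); [case: (a == k); rewrite /= ?mulrNN mulr1 | rewrite !mulr0n].
Qed.

Lemma W_sgn k (V : T) a b :
  W (diag_mx (sgn k) *m (V : 'M[R]_(N,p)) : T) a b = sgn k 0 a * sgn k 0 b * W V a b.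
Proof.
rewrite /W trmx_mul tr_diag_mx mulmxA -(mulmxA _ _ (V : 'M[R]_(N,p))^T).
by rewrite mul_mx_diag mxE mul_diag_mx mxE mulrAC.
Qed.

Lemma E_sgn k (V : T) : E lam (diag_mx (sgn k) *m (V : 'M[R]_(N,p)) : T) = E lam V.
Proof.
rewrite !EE; congr expR; apply: eq_bigr => m _; by rewrite W_sgn sgn2 mul1r.
Qed.

Lemma G_offdiag k l : k != l -> G k l = 0.
Proof.
move=> kl.
have := Rint_inv (diag_mx (sgn k)) _ (sgn_orth k) (goodWE k l).
rewrite (@eq_Rintegral _ _ _ mu _ (fun V => (-1) * (W V k l * E lam V))); last first.
  move=> V _; rewrite W_sgn E_sgn !mxE eqxx eq_sym (negbTE kl); lra.
rewrite Rint_scale; last exact: goodWE.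
rewrite -/(G k l); lra.
Qed.

Lemma W_Ua (V : T) i j : W (Ua *m (V : 'M[R]_(N,p)) : T) i j =
  \sum_l \sum_k (Ua i l * Ua j k) * W V l k.
Proof.
rewrite /W trmx_mul !mulmxA -(mulmxA Ua) -/(W V) mxE.
rewrite exchange_big /=; apply: eq_bigr => k _.
rewrite mxE big_distrl /=; apply: eq_bigr => l _; rewrite !mxE; ring.
Qed.

Lemma SM_entry i j : binghamSecondMoment mu A i j =
  expR (- kappaB mu A) * \sum_l (Ua i l * Ua j l) * G l l.
Proof.
rewrite /binghamSecondMoment mxE /binghamDensity.
have gW : good (fun U : T => W U i j * etr ((U : 'M[R]_(N,p))^T *m A *m U)).
  apply: good_mul; [exact: goodW | exact: good_etr].
under eq_Rintegral do rewrite mulrCA.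
rewrite (Rint_scale _ (fun U : T => W U i j * etr ((U : 'M[R]_(N,p))^T *m A *m U))) //.
congr (_ * _).
rewrite -(Rint_inv Ua _ hUa gW).
rewrite (@eq_Rintegral _ _ _ mu _ (fun V => \sum_l \sum_k (Ua i l * Ua j k) * (W V l k * E lam V))); last first.
  move=> V _ /=; rewrite conjA -/(E lam V) W_Ua big_distrl /=.
  apply: eq_bigr => l _; rewrite big_distrl /=; apply: eq_bigr => k _; ring.
rewrite Rint_sum; last first.
  move=> l; apply: good_sum => k; apply: good_mul; [exact: good_cst | exact: goodWE].
apply: eq_bigr => l _.
rewrite Rint_sum; last by move=> k; apply: good_mul; [exact: good_cst | exact: goodWE].
rewrite (bigD1 l) //= big1 ?addr0.
  by rewrite Rint_scale //; exact: goodWE.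
move=> k kl; rewrite Rint_scale; last exact: goodWE.
by rewrite -/(G l k) G_offdiag ?mulr0 // eq_sym.
Qed.


Lemma Rint_sub f g : good f -> good g ->
  \int[mu]_x (f x - g x) = \int[mu]_x f x - \int[mu]_x g x.
Proof. by move=> gf gg; apply: RintegralB => //; exact: int_good. Qed.

Lemma E_rowset k t (V : T) :
  E (rowset lam k t) V = E lam V * expR ((t - lam 0 k) * W V k k).
Proof.
rewrite !EE -expRD; congr expR.
rewrite (bigD1 k) //= [in RHS](bigD1 k) //= !mxE eqxx.
rewrite (@eq_bigr _ _ _ _ _ _ _ (fun m => lam 0 m * W V m m)); last first.
  by move=> m mk; rewrite !mxE (negbTE mk).
ring.
Qed.

Lemma expkappaE k t :
  expkappa_k mu lam k t = \int[mu]_V (E lam V * expR ((t - lam 0 k) * W V k k)).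
Proof.
rewrite /expkappa_k /kappaB lnK; last by rewrite posrE; exact: hyp_gt0.
by apply: eq_Rintegral => V _; rewrite -E_rowset.
Qed.

Lemma goodEexp c k : good (fun V => E lam V * expR (c * W V k k)).
Proof.
apply: good_mul; first exact: goodE.
apply: good_exp; apply: good_mul; [exact: good_cst | exact: goodW].
Qed.

Lemma deriv_est k h : h != 0 -> `|h| <= 2^-1 ->
  `|h^-1 * (expkappa_k mu lam k (h + lam 0 k) - expkappa_k mu lam k (lam 0 k)) - G k k|
   <= (2 * \int[mu]_V E lam V) * `|h|.
Proof.
move=> h0 h2.
rewrite !expkappaE subrr addrK.
have -> : \int[mu]_V (E lam V * expR (0 * W V k k)) = \int[mu]_V E lam V.
  by apply: eq_Rintegral => V _; rewrite mul0r expR0 mulr1.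
set F0 := \int[mu]_V E lam V.
set D := \int[mu]_V (E lam V * (expR (h * W V k k) - 1 - h * W V k k)).
have gD : good (fun V => E lam V * (expR (h * W V k k) - 1 - h * W V k k)).
  apply: good_mul; first exact: goodE.
  apply: good_add; last by apply: good_opp; apply: good_mul; [exact: good_cst | exact: goodW].
  apply: good_add; last exact: good_cst.
  apply: good_exp; apply: good_mul; [exact: good_cst | exact: goodW].
have eD : \int[mu]_V (E lam V * expR (h * W V k k)) - F0 - h * G k k = D.
  rewrite /G -Rint_scale; last exact: goodWE.
  rewrite -Rint_sub; [|exact: goodEexp|exact: goodE].
  rewrite -Rint_sub; last first.
  - apply: good_mul; [exact: good_cst | exact: goodWE].
  - apply: good_add; [exact: goodEexp| apply: good_opp; exact: goodE].
  by apply: eq_Rintegral => V _; ring.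
have hb : forall V, S V -> 0 <= E lam V * (expR (h * W V k k) - 1 - h * W V k k)
                               <= (2 * h ^+ 2) * E lam V.
  move=> V SV; have w0 := W_ge0 V k; have w1 := W_le1 V k SV.
  have Ep : 0 < E lam V by rewrite /E /etr expR_gt0.
  have hx : `|h * W V k k| <= 2^-1.
    rewrite normrM (ger0_norm w0); apply: le_trans h2.
    by rewrite ler_piMr.
  have /andP[b1 b2] := expR_bound _ hx.
  set x := expR (h * W V k k) - 1 - h * W V k k in b1 b2 *.
  apply/andP; split; first exact: mulr_ge0 (ltW Ep) b1.
  rewrite mulrC ler_pM2r //; apply: le_trans b2 _.
  set w := W V k k in w0 w1 *.
  rewrite exprMn ler_pM2l //; rewrite !expr2 ?ler_piMr //; nra.
have D0 : 0 <= D.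
  rewrite -(Rint_cst 0); apply: Rint_le; [exact: good_cst | exact: gD |].
  by move=> V SV; case/andP: (hb V SV).
have D1 : D <= 2 * h ^+ 2 * F0.
  rewrite /F0 -Rint_scale; last exact: goodE.
  apply: Rint_le; [exact: gD | apply: good_mul; [exact: good_cst | exact: goodE] |].
  by move=> V SV; case/andP: (hb V SV).
have -> : h^-1 * (\int[mu]_V (E lam V * expR (h * W V k k)) - F0) - G k k = h^-1 * D.
  by rewrite -eD; field.
rewrite normrM normfV (ger0_norm D0) ler_pdivrMl ?normr_gt0 //.
apply: le_trans D1 _.
have hn : h ^+ 2 = `|h| * `|h| by rewrite -expr2 real_normK ?num_real.
rewrite hn; have -> : `|h| * (2 * F0 * `|h|) = 2 * (`|h| * `|h|) * F0 by ring.
exact: lexx.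
Qed.


Section Swap.
Variables (i j : 'I_N).
Let sg := tperm i j.
Let Q : 'M[R]_N := perm_mx sg.
Definition lamS : 'rV[R]_N := \row_m lam 0 (sg m).

Lemma Q_orth : Q^T *m Q = 1%:M.
Proof. by rewrite /Q tr_perm_mx -perm_mxM tpermV tperm2 perm_mx1. Qed.

Lemma W_swap (V : T) a b : W (Q *m (V : 'M[R]_(N,p)) : T) a b = W V (sg a) (sg b).
Proof.
rewrite /Q -row_permE /W !mxE; apply: eq_bigr => c _; by rewrite !mxE.
Qed.

Lemma E_swap (V : T) : E lam (Q *m (V : 'M[R]_(N,p)) : T) = E lamS V.
Proof.
rewrite !EE; congr expR.
rewrite (reindex_inj (@perm_inj _ sg)) /=; apply: eq_bigr => m _.
by rewrite W_swap /sg !tpermK !mxE.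
Qed.

Lemma swap_int a : \int[mu]_V (W V a a * E lam V) = \int[mu]_V (W V (sg a) (sg a) * E lamS V).
Proof.
rewrite -(Rint_inv Q _ Q_orth (goodWE a a)).
by apply: eq_Rintegral => V _; rewrite W_swap E_swap.
Qed.

Lemma sdiff (V : T) : i != j ->
  \sum_m lam 0 m * W V m m - \sum_m lamS 0 m * W V m m =
  (lam 0 i - lam 0 j) * (W V i i - W V j j).
Proof.
move=> ij; rewrite -sumrB (bigD1 i) //= (bigD1 j) 1?eq_sym //= big1.
  by rewrite /lamS !mxE /sg tpermL tpermR; ring.
move=> m /andP[mj mi]; rewrite /lamS mxE /sg tpermD 1?eq_sym //; ring.
Qed.

End Swap.

Lemma G_mono i j : lam 0 j <= lam 0 i -> G j j <= G i i.
Proof.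
move=> lij; have [->|ij] := eqVneq i j; first exact: lexx.
have e1 := swap_int i j i; have e2 := swap_int i j j.
rewrite tpermL in e1; rewrite tpermR in e2.
rewrite /G.
set Ei := \int[mu]_V (W V i i * E lam V) in e1 *.
set Ej := \int[mu]_V (W V j j * E lam V) in e2 *.
set Fi := \int[mu]_V (W V i i * E (lamS i j) V) in e2.
set Fj := \int[mu]_V (W V j j * E (lamS i j) V) in e1.
have gS a : good (fun V => W V a a * E (lamS i j) V).
  by apply: good_mul; [exact: goodW | exact: goodE].
have g1 : good (fun V => W V i i * E lam V - W V j j * E lam V).
  exact: (good_add _ _ (goodWE i i) (good_opp _ (goodWE j j))).
have g2 : good (fun V => W V j j * E (lamS i j) V - W V i i * E (lamS i j) V).
  exact: (good_add _ _ (gS j) (good_opp _ (gS i))).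
have key : 0 <= \int[mu]_V ((W V i i * E lam V - W V j j * E lam V) +
                              (W V j j * E (lamS i j) V - W V i i * E (lamS i j) V)).
  rewrite -(Rint_cst 0); apply: Rint_le; first exact: good_cst.
    exact: (good_add _ _ g1 g2).
  move=> V SV.
  have sd := sdiff i j V ij.
  rewrite !EE.
  set s := \sum_m lam 0 m * W V m m in sd *.
  set s' := \sum_m lamS i j 0 m * W V m m in sd *.
  have h : 0 <= (W V i i - W V j j) * (expR s - expR s').
    have [hw|hw] := lerP (W V j j) (W V i i).
      have p0 : 0 <= (lam 0 i - lam 0 j) * (W V i i - W V j j).
        apply: mulr_ge0; rewrite subr_ge0; [exact: lij | exact: hw].
      have hs0 : s' <= s by rewrite -subr_ge0 sd; exact: p0.
      have hs : expR s' <= expR s by rewrite ler_expR; exact: hs0.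
      apply: mulr_ge0; rewrite subr_ge0; [exact: hw | exact: hs].
    have p0 : (lam 0 i - lam 0 j) * (W V i i - W V j j) <= 0.
      apply: mulr_ge0_le0; [rewrite subr_ge0; exact: lij | rewrite subr_le0; exact: ltW hw].
    have hs0 : s <= s' by rewrite -subr_le0 sd; exact: p0.
    have hs : expR s <= expR s' by rewrite ler_expR; exact: hs0.
    apply: mulr_le0; rewrite subr_le0; [exact: ltW hw | exact: hs].
  set a := expR s in h *; set b := expR s' in h *.
  have -> : W V i i * a - W V j j * a + (W V j j * b - W V i i * b) = (W V i i - W V j j) * (a - b).
    by ring.
  exact: h.
rewrite (Rint_add _ _ g1 g2) in key.
rewrite (Rint_sub _ _ (goodWE i i) (goodWE j j)) in key.
rewrite (Rint_sub _ _ (gS j) (gS i)) in key.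
rewrite -/Ei -/Ej -/Fi -/Fj in key; lra.
Qed.


Lemma main_dec (hsort : forall i j : 'I_N, (i <= j)%N -> lam 0 j <= lam 0 i) :
  (forall k : 'I_N, derivable (expkappa_k mu lam k) (lam 0 k) 1) /\
  binghamSecondMoment mu A =
    expR (- kappaB mu A) *: (Ua *m diag_mx (gammaB mu lam) *m Ua^T) /\
  (forall i j : 'I_N, (i <= j)%N -> gammaB mu lam 0 j <= gammaB mu lam 0 i).
Proof.
have F0pos : 0 < \int[mu]_V E lam V := hyp_gt0 (diag_mx lam).
have C0 : 0 <= 2 * \int[mu]_V E lam V by apply: mulr_ge0 => //; exact: ltW.
have dk k : derivable (expkappa_k mu lam k) (lam 0 k) 1 /\
            derive1 (expkappa_k mu lam k) (lam 0 k) = G k k.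
  exact: (deriv_bound _ _ _ _ _ C0 (deriv_est k)).
have gam k : gammaB mu lam 0 k = G k k by rewrite mxE; case: (dk k).
split; first by move=> k; case: (dk k).
split.
  have -> : gammaB mu lam = \row_k G k k by apply/rowP => k; rewrite gam mxE.
  apply/matrixP => i j; rewrite SM_entry mxE; congr (_ * _).
  rewrite mul_mx_diag mxE; apply: eq_bigr => l _; rewrite !mxE; ring.
move=> i j ij; rewrite !gam; apply: G_mono; exact: hsort.
Qed.

End Dec.
End S.

Theorem proposition1 (R : realType) (N p : nat)
  (hp : (1 <= p)%N) (hNp : (p < N)%N)
  (mu : probability (mxMeas R N p) R) (hmu : uniform_stiefel mu)
  (A : 'M[R]_N) (hA : A^T = A)
  (Ua : 'M[R]_N) (hUa : Ua^T *m Ua = 1%:M)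
  (lam : 'rV[R]_N)
  (hdec : A = Ua *m diag_mx lam *m Ua^T)
  (hsort : forall i j : 'I_N, (i <= j)%N -> lam 0 j <= lam 0 i) :
  (forall k : 'I_N, derivable (expkappa_k mu lam k) (lam 0 k) 1) /\
  binghamSecondMoment mu A =
    expR (- kappaB mu A) *: (Ua *m diag_mx (gammaB mu lam) *m Ua^T) /\
  (forall i j : 'I_N, (i <= j)%N -> gammaB mu lam 0 j <= gammaB mu lam 0 i).
Proof. exact: (@main_dec R N p mu hmu A Ua lam hUa hdec hsort). Qed.
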